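(* For all integers $n,f$ with $1\le f\le n-2$, the wait-free Consensus task $\mathrm{Cons}(f+1,f)$ is not $C$-reducible to the $f$-resilient Consensus task $\mathrm{Cons}(n,f)$.
   Context: Model: a finite set of processes runs an asynchronous algorithm communicating by reliable message passing with unbounded delays and speeds; processes fail only by crashing. Time is $\mathcal T=\mathbb N$; a failure pattern $F$ for $\Pi$ is a nondecreasing map $\mathcal T\to2^\Pi$, $Faulty(F)=\bigcup_tF(t)$. A task $T=(P,f)$ consists of a binary agreement problem $P$ (mapping $(F,\vec V)$, $\vec V\in\{0,1\}^\Pi$, to a nonempty $P(F,\vec V)\subseteq\{0,1\}$) and a resiliency degree $f$. An algorithm solves $T$ if in every run with $|Faulty(F)|\le f$ and initial values $\vec V$: every correct process eventually decides, decisions are irrevocable, no two processes decide differently, and decisions lie in $P(F,\vec V)$. Binary Consensus $\mathrm{Cons}(n,f)=(\mathrm{Cons}_{\Pi},f)$ on $\Pi=\{1,\dots,n\}$: $\mathrm{Cons}_\Pi(F,\vec V)=\{v\}$ if all entries of $\vec V$ equal $v$, and $\{0,1\}$ otherwise. Oracles: for $T=(P,f)$ on process set $\Pi'$, $\mathcal O.T$ is a black box with consultants $\Pi'$; its history is a sequence of successive consultations, in each of which every consultant may submit at most one query in $\{0,1\}$ and the oracle returns a common response $d$ with $d\in P(F,\vec V)$ for every $\vec V$ extending the partial query vector (the oracle may use the whole failure pattern, including future crashes), and every correct querier gets the response whenever at least $|\Pi'|-f$ consultants query; $\mathcal O.T$ is the most general such oracle. $C$-reduction: $T_1\le_C T_2$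 if there is an algorithm solving $T_1$ whose processes, besides message passing, may consult a single oracle $\mathcal O.T_2'$ where $T_2'$ is a renamed copy of $T_2$ whose consultant set contains or is contained in the process set of $T_1$; consultants that are not processes of $T_1$ never query and count as crashed from the start for the oracle. $\le_C$ is transitive. *)

(* Defs.v *)
From mathcomp Require Import all_boot.
Set Implicit Arguments.
Unset Strict Implicit.
Unset Printing Implicit Defensive.

Definition failure_pattern (P : finType) (F : nat -> {set P}) : Prop :=
  forall t t', t <= t' -> F t \subset F t'.

Definition correct (P : finType) (F : nat -> {set P}) (p : P) : Prop :=
  forall t, p \notin F t.

Definition at_most_faulty (P : finType) (F : nat -> {set P}) (f : nat) : Prop :=
  exists S : {set P}, #|S| <= f /\ forall t p, p \in F t -> p \in S.

(* A binary agreement problem: (F, V) |-> subset of {0,1}, given as a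
   membership predicate  d \in P(F,V). *)
Definition agreement_problem (P : finType) :=
  (nat -> {set P}) -> (P -> bool) -> bool -> Prop.

(* Binary consensus on the process set P:
   Cons_P(F,V) = {v} if all entries of V equal v, {0,1} otherwise. *)
Definition ConsPb (P : finType) : agreement_problem P :=
  fun F V d => forall v : bool, (forall c, V c = v) -> d = v.

Inductive input (P M : Type) : Type :=
| In_none : input P M
| In_msg : P -> M -> input P M
| In_resp : bool -> input P M.
Arguments In_none {P M}.
Arguments In_msg {P M}.
Arguments In_resp {P M}.

Record algo (P : finType) := Algo {
  a_state : Type;
  a_msg : Type;
  a_init : P -> bool -> a_state;
  a_step : P -> a_state -> input P a_msg ->
           a_state * (seq (P * a_msg) * option bool);
  a_dec : a_state -> option bool
}.
Arguments a_state {P} a.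
Arguments a_msg {P} a.
Arguments a_init {P} a.
Arguments a_step {P} a.
Arguments a_dec {P} a.

Definition schedule (P : finType) (A : algo P) :=
  nat -> option (P * input P (a_msg A)).

Section Runs.
Variables (P : finType) (A : algo P) (V : P -> bool) (s : schedule A).

Fixpoint cfg (t : nat) : P -> a_state A :=
  match t with
  | 0 => fun p => a_init A p (V p)
  | t'.+1 => fun p =>
      match s t' with
      | Some (q, i) => if q == p then (a_step A p (cfg t' p) i).1 else cfg t' p
      | None => cfg t' p
      end
  end.

Definition output (t : nat) : option (P * (seq (P * a_msg A) * option bool)) :=
  match s t with
  | Some (p, i) => Some (p, (a_step A p (cfg t p) i).2)
  | None => None
  end.

(* the j-th message sent at time t: (sender, (destination, content)) *)
Definition sent (t j : nat) : option (P * (P * a_msg A)) :=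
  match output t with
  | Some (p, (ms, _)) => omap (fun x => (p, x)) (onth ms j)
  | None => None
  end.

Definition query (t : nat) : option (P * bool) :=
  match output t with
  | Some (p, (_, Some b)) => Some (p, b)
  | _ => None
  end.

Definition is_query_of (p : P) (t : nat) : bool :=
  if query t is Some (q, _) then q == p else false.

Definition nqueries (p : P) (t : nat) : nat := count (is_query_of p) (iota 0 t).

(* at time t0, p submits query b, and this is p's k-th query (counting from
   0), i.e. its query in the k-th consultation of the oracle *)
Definition queries_in (p : P) (k : nat) (b : bool) (t0 : nat) : Prop :=
  query t0 = Some (p, b) /\ nqueries p t0 = k.

End Runs.

(* The renamed copy of the oracle task has consultant set Q; the map
   emb : P -> option Q identifies processes with consultants (None = the
   process is not a consultant). *)
Definition renaming_ok (P Q : finType) (emb : P -> option Q) : Prop :=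
  (forall p p' c, emb p = Some c -> emb p' = Some c -> p = p') /\
  ((forall p, emb p != None) \/ (forall c, exists p, emb p = Some c)).

(* failure pattern seen by the oracle: consultants that are not processes
   count as crashed from the start. *)
Definition oracle_fp (P Q : finType) (emb : P -> option Q) (F : nat -> {set P})
  : nat -> {set Q} :=
  fun t => [set c | [exists p, (emb p == Some c) && (p \in F t)]
                    || ~~ [exists p, emb p == Some c]].

Definition admissible (P Q : finType) (A : algo P) (emb : P -> option Q)
  (P2 : agreement_problem Q) (f2 : nat)
  (F : nat -> {set P}) (V : P -> bool) (s : schedule A) : Prop :=
  failure_pattern F /\
  (forall t p i, s t = Some (p, i) -> p \notin F t) /\
  (forall p, correct F p -> forall t, exists t' i, t <= t' /\ s t' = Some (p, i)) /\
  (exists mt : nat -> nat * nat,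
     (forall t p q m, s t = Some (p, In_msg q m) ->
        (mt t).1 < t /\ sent V s (mt t).1 (mt t).2 = Some (q, (p, m))) /\
     (forall t1 t2 p1 p2 q1 q2 m1 m2,
        s t1 = Some (p1, In_msg q1 m1) -> s t2 = Some (p2, In_msg q2 m2) ->
        mt t1 = mt t2 -> t1 = t2) /\
     (forall t0 j q p m, sent V s t0 j = Some (q, (p, m)) -> correct F p ->
        exists t, s t = Some (p, In_msg q m) /\ mt t = (t0, j))) /\
  (* the oracle O.(P2,f2): rc t = consultation answered by the response
     received at time t, od k = common response of consultation k *)
  (exists (rc : nat -> nat) (od : nat -> bool),
     (forall t p d, s t = Some (p, In_resp d) ->
        [/\ d = od (rc t),
            exists c, emb p = Some c,
            (exists t0 b, t0 < t /\ queries_in V s p (rc t) b t0) &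
            (forall W : Q -> bool,
               (forall t0 p' c b, t0 < t -> emb p' = Some c ->
                  queries_in V s p' (rc t) b t0 -> W c = b) ->
               P2 (oracle_fp emb F) W (od (rc t)))]) /\
     (forall t1 t2 p d1 d2, s t1 = Some (p, In_resp d1) ->
        s t2 = Some (p, In_resp d2) -> rc t1 = rc t2 -> t1 = t2) /\
     (forall k,
        (exists S : {set Q}, #|Q| - f2 <= #|S| /\
           forall c, c \in S -> exists p b t0, emb p = Some c /\ queries_in V s p k b t0) ->
        forall p c b t0, emb p = Some c -> queries_in V s p k b t0 ->
          correct (oracle_fp emb F) c ->
          exists t d, s t = Some (p, In_resp d) /\ rc t = k)).

Definition solves_with_oracle (P Q : finType) (A : algo P)
  (P1 : agreement_problem P) (f1 : nat)
  (emb : P -> option Q) (P2 : agreement_problem Q) (f2 : nat) : Prop :=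
  forall (F : nat -> {set P}) (V : P -> bool) (s : schedule A),
    at_most_faulty F f1 -> @admissible P Q A emb P2 f2 F V s ->
    [/\
        (forall p, correct F p -> exists t v, a_dec A (cfg V s t p) = Some v),
        (forall p t t' v, t <= t' -> a_dec A (cfg V s t p) = Some v ->
                          a_dec A (cfg V s t' p) = Some v),
        (forall p q t t' v w, a_dec A (cfg V s t p) = Some v ->
                              a_dec A (cfg V s t' q) = Some w -> v = w) &
        (forall p t v, a_dec A (cfg V s t p) = Some v -> P1 F V v)].

Definition C_reducible (P Q : finType) (P1 : agreement_problem P) (f1 : nat)
  (P2 : agreement_problem Q) (f2 : nat) : Prop :=
  exists emb : P -> option Q, renaming_ok emb /\
    exists A : algo P, solves_with_oracle A P1 f1 emb P2 f2.

(* Main.v *)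
Require Import Defs.
From mathcomp Require Import all_boot zify.
From Stdlib Require Import Cantor ClassicalEpsilon.
Set Implicit Arguments.
Unset Strict Implicit.
Unset Printing Implicit Defensive.


Definition slot (u : nat) : nat * nat := Cantor.of_nat (Cantor.of_nat u).1.

Lemma slot_inf (x : nat * nat) (N : nat) : exists u, N <= u /\ slot u = x.
Proof.
exists (Cantor.to_nat (Cantor.to_nat x, N)); split.
  have := Cantor.to_nat_non_decreasing (Cantor.to_nat x) N.
  move/leP; apply: leq_trans; exact: leq_addr.
by rewrite /slot !Cantor.cancel_of_to.
Qed.

Lemma first_unique (Qp : nat -> bool) t0 t1 t2 : t0 < t1 -> t0 < t2 -> Qp t1 -> Qp t2 ->
  ~~ has Qp (iota t0.+1 (t1 - t0.+1)) -> ~~ has Qp (iota t0.+1 (t2 - t0.+1)) -> t1 = t2.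
Proof.
move=> h1 h2 q1 q2 n1 n2.
case: (ltngtP t1 t2) => // lt.
  case/negP: n2; apply/hasP; exists t1 => //; rewrite mem_iota; lia.
case/negP: n1; apply/hasP; exists t2 => //; rewrite mem_iota; lia.
Qed.

Lemma first_exists (Qp : nat -> bool) t0 : (exists u, t0 < u /\ Qp u) ->
  exists u, [/\ t0 < u, Qp u & ~~ has Qp (iota t0.+1 (u - t0.+1))].
Proof.
move=> ex.
have ex' : exists u, (t0 < u) && Qp u by case: ex => u [a b]; exists u; rewrite a b.
case: (ex_minnP ex') => u /andP [lt qu] mn.
exists u; split => //; apply/hasP => [[u' ]]; rewrite mem_iota => /andP [a b] qu'.
have := mn u'; rewrite qu' andbT.
have -> : t0 < u' by [].
move=> /(_ isT); lia.
Qed.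

Section Gen.
Variables (P : finType) (A : algo P).

Lemma cfg_ext (V : P -> bool) (s1 s2 : schedule A) t :
  (forall u, u < t -> s1 u = s2 u) -> forall p, cfg V s1 t p = cfg V s2 t p.
Proof.
elim: t => [|t IH] H p //=.
rewrite H // IH // => u lt; apply: H; exact: ltnW.
Qed.

Lemma output_ext (V : P -> bool) (s1 s2 : schedule A) t :
  (forall u, u <= t -> s1 u = s2 u) -> output V s1 t = output V s2 t.
Proof.
move=> H; rewrite /output H //; case: (s2 t) => [[p i]|] //.
rewrite (@cfg_ext V s1 s2 t) // => u lt; apply: H; exact: ltnW.
Qed.

Lemma sent_ext (V : P -> bool) (s1 s2 : schedule A) t j :
  (forall u, u <= t -> s1 u = s2 u) -> sent V s1 t j = sent V s2 t j.
Proof. by move=> H; rewrite /sent (output_ext V H). Qed.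

Lemma query_ext (V : P -> bool) (s1 s2 : schedule A) t :
  (forall u, u <= t -> s1 u = s2 u) -> query V s1 t = query V s2 t.
Proof. by move=> H; rewrite /query (output_ext V H). Qed.

Lemma sent_step (V : P -> bool) (s : schedule A) t j q x :
  sent V s t j = Some (q, x) -> exists i, s t = Some (q, i).
Proof.
rewrite /sent /output; case: (s t) => [[p i]|] //.
case: (a_step A p _ i).2 => ms o.
by case: (onth ms j) => //= y [<- _]; exists i.
Qed.

Lemma query_step (V : P -> bool) (s : schedule A) t q b :
  query V s t = Some (q, b) -> exists i, s t = Some (q, i).
Proof.
rewrite /query /output; case: (s t) => [[p i]|] //.
case: (a_step A p _ i).2 => ms [o|] // [<- _]; by exists i.
Qed.

Definition proj (r : P) (o : option (P * input P (a_msg A))) :=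
  if o is Some (r', i) then (if r' == r then Some i else None) else None.

Lemma cfg_local (V1 V2 : P -> bool) (s1 s2 : schedule A) r t :
  V1 r = V2 r -> (forall u, u < t -> proj r (s1 u) = proj r (s2 u)) ->
  cfg V1 s1 t r = cfg V2 s2 t r.
Proof.
move=> HV; elim: t => [|t IH] H /=; first by rewrite HV.
have IH' : cfg V1 s1 t r = cfg V2 s2 t r by apply: IH => u lt; apply: H; exact: ltnW.
have := H t (ltnSn t); rewrite /proj.
case: (s1 t) => [[p1 i1]|]; case: (s2 t) => [[p2 i2]|] //=.
- case: eqP => e1; case: eqP => e2 //=; subst; first by case=> ->; rewrite IH'.
- by case: eqP => // _ _; rewrite IH'.
- by case: eqP => // _ _; rewrite IH'.
Qed.

Lemma nqueries_lt (V : P -> bool) (s : schedule A) p a b x :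
  query V s a = Some (p, x) -> a < b -> nqueries V s p a < nqueries V s p b.
Proof.
move=> Hq lt; rewrite /nqueries.
have -> : b = a + (b - a) by lia.
rewrite iotaD count_cat add0n.
have -> : b - a = (b - a - 1).+1 by lia.
by rewrite /= /is_query_of Hq eqxx /=; lia.
Qed.

Lemma queries_unique (V : P -> bool) (s : schedule A) p k b1 b2 t1 t2 :
  queries_in V s p k b1 t1 -> queries_in V s p k b2 t2 -> t1 = t2.
Proof.
move=> [q1 n1] [q2 n2]; case: (ltngtP t1 t2) => // lt.
  by have := nqueries_lt q1 lt; rewrite n1 n2 ltnn.
by have := nqueries_lt q2 lt; rewrite n1 n2 ltnn.
Qed.

End Gen.


Section Sched.
Variables (P : finType) (A : algo P) (V : P -> bool) (who : nat -> option P)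
  (allowed : nat -> P -> P -> bool) (resp : nat -> bool).

Definition qualm (t0 jj : nat) (snd rcv : P) (u' : nat) : bool :=
  [&& slot u' == (t0, jj), who u' == Some rcv & allowed u' snd rcv].
Definition qualr (t0 : nat) (r : P) (u' : nat) : bool :=
  [&& slot u' == (t0, 0), who u' == Some r & resp u'].

Definition inp (u : nat) (r : P) (sentf : nat -> nat -> option (P * (P * a_msg A)))
  (queryf : nat -> option (P * bool)) : input P (a_msg A) :=
  match slot u with
  | (t0, jj) =>
    if t0 < u then
      match jj with
      | j.+1 => match sentf t0 j with
               | Some (snd, (rcv, m)) =>
                   if [&& rcv == r, allowed u snd rcv &
                        ~~ has (qualm t0 jj snd rcv) (iota t0.+1 (u - t0.+1))]
                   then In_msg snd m else In_none
               | None => In_none end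
      | 0 => match queryf t0 with
             | Some (r', b) =>
                 if [&& r' == r, resp u & ~~ has (qualr t0 r') (iota t0.+1 (u - t0.+1))]
                 then In_resp b else In_none
             | None => In_none end
      end
    else In_none
  end.

Definition decide u sentf queryf : option (P * input P (a_msg A)) :=
  if who u is Some r then Some (r, inp u r sentf queryf) else None.

Lemma decide_ext u sf1 qf1 sf2 qf2 :
  (forall t0 j, t0 < u -> sf1 t0 j = sf2 t0 j) -> (forall t0, t0 < u -> qf1 t0 = qf2 t0) ->
  decide u sf1 qf1 = decide u sf2 qf2.
Proof.
move=> Hs Hq; rewrite /decide; case: (who u) => // r; rewrite /inp.
case: (slot u) => t0 [|j]; case: ltnP => // lt; by rewrite ?Hs ?Hq.
Qed.

Definition tofun (l : seq (option (P * input P (a_msg A)))) : schedule A :=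
  fun u => nth None l u.

Fixpoint build (k : nat) : seq (option (P * input P (a_msg A))) :=
  if k is k'.+1 then
    let l := build k' in rcons l (decide k' (sent V (tofun l)) (query V (tofun l)))
  else [::].

Lemma size_build k : size (build k) = k.
Proof. by elim: k => //= k IH; rewrite size_rcons IH. Qed.

Lemma nth_build k u : u < k -> nth None (build k) u = nth None (build u.+1) u.
Proof.
elim: k => // k IH; rewrite ltnS leq_eqVlt => /orP [/eqP -> //|lt].
by rewrite /= nth_rcons size_build lt IH.
Qed.

Definition sch : schedule A := fun u => nth None (build u.+1) u.

Lemma sch_eq u : sch u = decide u (sent V sch) (query V sch).
Proof.
rewrite /sch /= nth_rcons size_build ltnn eqxx.
have H : forall t, t < u -> tofun (build u) t = sch t.
  by move=> t lt; rewrite /tofun nth_build.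
apply: decide_ext => [t0 j lt|t0 lt]; [apply: sent_ext|apply: query_ext];
  move=> w le; apply: H; exact: leq_ltn_trans le lt.
Qed.

Lemma sch_who u r i : sch u = Some (r, i) -> who u = Some r.
Proof. by rewrite sch_eq /decide; case: (who u) => // r' [->]. Qed.

Lemma who_sch u r : who u = Some r -> exists i, sch u = Some (r, i).
Proof. by rewrite sch_eq /decide => ->; eexists. Qed.

Lemma sch_none u : who u = None -> sch u = None.
Proof. by rewrite sch_eq /decide => ->. Qed.

Lemma sch_msg t p q m : sch t = Some (p, In_msg q m) ->
  exists t0 j, [/\ slot t = (t0, j.+1), t0 < t, sent V sch t0 j = Some (q, (p, m)),
     qualm t0 j.+1 q p t & ~~ has (qualm t0 j.+1 q p) (iota t0.+1 (t - t0.+1))].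
Proof.
rewrite sch_eq /decide; case Hw: (who t) => [r|] //= [Er]; subst r.
rewrite /inp; case Es: (slot t) => [t0 [|j]]; case: ltnP => // lt.
  by case: (query V sch t0) => [[r' b]|] //; case: ifP.
case Hs: (sent V sch t0 j) => [[snd [rcv m']]|] //.
case: ifP => // /and3P [/eqP Er Hal Hn] [Eq Em]; subst.
exists t0, j; split => //.
by rewrite /qualm Es Hw !eqxx Hal.
Qed.

Lemma sch_resp t p d : sch t = Some (p, In_resp d) ->
  exists t0, [/\ slot t = (t0, 0), t0 < t, query V sch t0 = Some (p, d),
     qualr t0 p t & ~~ has (qualr t0 p) (iota t0.+1 (t - t0.+1))].
Proof.
rewrite sch_eq /decide; case Hw: (who t) => [r|] //= [Er]; subst r.
rewrite /inp; case Es: (slot t) => [t0 [|j]]; case: ltnP => // lt; last first.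
  by case: (sent V sch t0 j) => [[snd [rcv m']]|] //; case: ifP.
case Hq: (query V sch t0) => [[r' b]|] //.
case: ifP => // /and3P [/eqP Er Hr Hn] [Ed]; subst.
exists t0; split => //.
by rewrite /qualr Es Hw !eqxx Hr.
Qed.

Lemma sch_deliver t0 j q p m : sent V sch t0 j = Some (q, (p, m)) ->
  (exists u, t0 < u /\ qualm t0 j.+1 q p u) ->
  exists t, sch t = Some (p, In_msg q m) /\ slot t = (t0, j.+1).
Proof.
move=> Hs ex; case: (first_exists ex) => u [lt Hq Hn].
move: (Hq) => /and3P [/eqP Es /eqP Hw Hal].
exists u; split => //.
by rewrite sch_eq /decide Hw /inp Es lt Hs eqxx Hal Hn.
Qed.

Lemma sch_respond t0 p b : query V sch t0 = Some (p, b) ->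
  (exists u, t0 < u /\ qualr t0 p u) ->
  exists t, sch t = Some (p, In_resp b) /\ slot t = (t0, 0).
Proof.
move=> Hs ex; case: (first_exists ex) => u [lt Hq Hn].
move: (Hq) => /and3P [/eqP Es /eqP Hw Hr].
exists u; split => //.
by rewrite sch_eq /decide Hw /inp Es lt Hs eqxx Hr Hn.
Qed.

End Sched.


Section Adm.
Variables (P : finType) (A : algo P) (V : P -> bool) (who : nat -> option P)
  (allowed : nat -> P -> P -> bool) (resp : nat -> bool).
Variables (Q : finType) (emb : P -> option Q) (f2 : nat) (F : nat -> {set P}) (q0 : P).

Let S := sch A V who allowed resp.

Hypothesis G1 : failure_pattern F.
Hypothesis G2 : forall u r, who u = Some r -> r \notin F u.
Hypothesis G3 : forall r, correct F r -> forall N, exists u, N <= u /\ who u = Some r.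
Hypothesis G4 : forall r snd x N, correct F r ->
  exists u, N <= u /\ slot u = x /\ who u = Some r /\ allowed u snd r.
Hypothesis G5 : forall u, resp u -> who u = Some q0 /\ emb q0 != None.
Hypothesis G6 : forall k,
  (exists S' : {set Q}, #|Q| - f2 <= #|S'| /\
     forall c, c \in S' -> exists p b t0, emb p = Some c /\ queries_in V S p k b t0) ->
  forall p c b t0, emb p = Some c -> queries_in V S p k b t0 ->
    correct (oracle_fp emb F) c ->
    forall x N, exists u, N <= u /\ slot u = x /\ who u = Some p /\ resp u.

Theorem sch_admissible : admissible emb (@ConsPb Q) f2 F V S.
Proof.
split; first exact: G1.
split; first by move=> t p i /sch_who /G2.
split.
  move=> p cp t; case: (G3 cp t) => u [le Hw]; case: (who_sch A V allowed resp Hw) => i Hi.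
  by exists u, i.
split.
  exists (fun t => ((slot t).1, (slot t).2.-1)); split; [|split].
  - by move=> t p q m /sch_msg [t0 [j [Es lt Hs _ _]]]; rewrite Es.
  - move=> t1 t2 p1 p2 q1 q2 m1 m2 /sch_msg [a [j [Ea lta Hsa Qa Na]]]
      /sch_msg [b [k [Eb ltb Hsb Qb Nb]]]; rewrite Ea Eb /= => [[eab ejk]]; subst.
    rewrite Hsa in Hsb; case: Hsb => e1 e2 _; subst.
    exact: (first_unique lta ltb Qa Qb Na Nb).
  - move=> t0 j q p m Hs cp.
    case: (G4 q (t0, j.+1) t0.+1 cp) => u [le [Es [Hw Hal]]].
    case: (sch_deliver Hs) => [|t [Ht Es']].
      by exists u; split => //; rewrite /qualm Es Hw !eqxx Hal.
    by exists t; rewrite Es'.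
pose rc t := nqueries V S q0 (slot t).1.
pose od k := epsilon (inhabits false) (fun b => exists t0, queries_in V S q0 k b t0).
exists rc, od; split; [|split].
- move=> t p d /sch_resp [t0 [Es lt Hq Qr Nr]].
  move: (Qr) => /and3P [_ /eqP Hw Hr].
  case: (G5 Hr); rewrite Hw => [[Ep]] Ne; subst p.
  have QI : queries_in V S q0 (rc t) d t0 by rewrite /rc Es; split.
  have Hd : d = od (rc t).
    have := epsilon_spec (inhabits false) (fun b => exists t0, queries_in V S q0 (rc t) b t0)
      (ex_intro _ d (ex_intro _ t0 QI)).
    rewrite -/(od (rc t)) => [[t0' QI']].
    have e := queries_unique QI QI'; subst t0'.
    by case: QI => Hq1 _; case: QI' => Hq2 _; rewrite Hq1 in Hq2; case: Hq2.
  case Ec: (emb q0) Ne => [c|] // _.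
  split => //; first by exists c.
    by exists t0, d.
  move=> W HW v Hv; rewrite -Hd -(Hv c).
  by rewrite (HW t0 q0 c d lt Ec QI).
- move=> t1 t2 p d1 d2 /sch_resp [a [Ea lta Hqa Qa Na]] /sch_resp [b [Eb ltb Hqb Qb Nb]].
  rewrite /rc Ea Eb /= => En.
  move: (Qa) => /and3P [_ /eqP Hw Hr].
  case: (G5 Hr); rewrite Hw => [[Ep]] _; subst p.
  have e := @queries_unique _ _ V S q0 _ d1 d2 a b (conj Hqa En) (conj Hqb erefl); subst b.
  exact: (first_unique lta ltb Qa Qb Na Nb).
- move=> k HS p c b t0 Ec QI Cc.
  case: (G6 HS Ec QI Cc (t0, 0) t0.+1) => u [le [Es [Hw Hr]]].
  case: (G5 Hr); rewrite Hw => [[Ep]] _; subst p.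
  case: (sch_respond (proj1 QI)) => [|t [Ht Es']].
    by exists u; split => //; rewrite /qualr Es Hw !eqxx Hr.
  exists t, b; split => //.
  by rewrite /rc Es' /=; case: QI.
Qed.

End Adm.

Section Solo.
Variables (P : finType) (A : algo P) (V : P -> bool) (who : nat -> option P)
  (allowed : nat -> P -> P -> bool) (resp : nat -> bool).
Variables (Q : finType) (emb : P -> option Q) (f2 : nat) (F : nat -> {set P}).

Lemma solo_G6 (r0 : P) : (forall u r, who u = Some r -> r = r0) -> 2 <= #|Q| - f2 ->
  forall k,
  (exists S' : {set Q}, #|Q| - f2 <= #|S'| /\
     forall c, c \in S' -> exists p b t0, emb p = Some c /\
        queries_in V (sch A V who allowed resp) p k b t0) ->
  forall p c b t0, emb p = Some c -> queries_in V (sch A V who allowed resp) p k b t0 ->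
    correct (oracle_fp emb F) c ->
    forall x N, exists u, N <= u /\ slot u = x /\ who u = Some p /\ resp u.
Proof.
move=> Hw Hn k [S' [Hc HS]].
have Hsub : forall c, c \in S' -> emb r0 = Some c.
  move=> c /HS [p [b [t0 [Ec [Hq _]]]]].
  case: (query_step Hq) => i /sch_who /Hw e; subst; exact: Ec.
exfalso.
have : #|S'| <= 1.
  case E: (emb r0) => [c0|].
    rewrite -(cards1 c0); apply: subset_leq_card; apply/subsetP => c /Hsub.
    by rewrite E inE => [[->]].
  suff -> : S' = set0 by rewrite cards0.
  apply/setP => c; rewrite inE; apply/negP => /Hsub; by rewrite E.
lia.
Qed.
End Solo.


Lemma output_eq (P : finType) (A : algo P) (V1 V2 : P -> bool) (s1 s2 : schedule A) t :
  s1 t = s2 t -> (forall r i, s1 t = Some (r, i) -> cfg V1 s1 t r = cfg V2 s2 t r) ->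
  output V1 s1 t = output V2 s2 t.
Proof.
rewrite /output => <-; case: (s1 t) => [[r i]|] // H.
by rewrite (H r i).
Qed.

Lemma has_range_eq (Q1 Q2 : nat -> bool) t0 u :
  (forall u', t0 < u' -> u' < u -> Q1 u' = Q2 u') ->
  has Q1 (iota t0.+1 (u - t0.+1)) = has Q2 (iota t0.+1 (u - t0.+1)).
Proof.
move=> H; apply: eq_in_has => u'; rewrite mem_iota => /andP [a b]; apply: H; lia.
Qed.

Unset Implicit Arguments.

Theorem mainTheorem17 (n f : nat) :
  1 <= f -> f <= n - 2 ->
  ~ C_reducible (@ConsPb 'I_(f + 1)) f (@ConsPb 'I_n) f.
Proof.
move=> hf1 hfn [emb [_ [A HA]]].
have hp : 0 < f + 1 by lia.
have hq : 1 < f + 1 by lia.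
pose p := Ordinal hp.
pose q := Ordinal hq.
have pq : (p == q) = false by [].
have qp : (q == p) = false by [].
have Hn : 2 <= #|'I_n| - f by rewrite card_ord; lia.
have cardC : forall x : 'I_(f + 1), #|[set~ x]| <= f by move=> x; rewrite cardsC1 card_ord addn1.
pose who1 := fun _ : nat => Some p.
pose al1 := fun (_ : nat) (_ _ : 'I_(f + 1)) => true.
pose rs1 := fun _ : nat => false.
pose V1 := fun _ : 'I_(f + 1) => true.
pose F1 := fun _ : nat => [set~ p].
pose S1 := sch A V1 who1 al1 rs1.
have cr1 : forall r, correct F1 r -> r = p by move=> r /(_ 0); rewrite !inE negbK => /eqP.
have adm1 : admissible emb (@ConsPb 'I_n) f F1 V1 S1.
  apply: (@sch_admissible _ A V1 who1 al1 rs1 _ emb f F1 p).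
  - by move=> t t' _; rewrite subxx.
  - by move=> u r [<-]; rewrite !inE eqxx.
  - by move=> r /cr1 -> N; exists N.
  - move=> r snd x N /cr1 ->; case: (slot_inf x N) => u [le e]; by exists u.
  - by [].
  - by apply: (solo_G6 (r0 := p)) => // u r [<-].
have fa1 : at_most_faulty F1 f by exists [set~ p]; split.
case: (HA F1 V1 S1 fa1 adm1) => Ht1 _ _ Hv1.
have cp : correct F1 p by move=> t; rewrite !inE eqxx.
case: (Ht1 p cp) => T1 [v1 Hd1].
have := Hv1 _ _ _ Hd1; rewrite /ConsPb => /(_ true (fun _ => erefl)) Ev; subst v1.
pose who2 := fun u => if u < T1 then None else Some q.
pose V2 := fun _ : 'I_(f + 1) => false.
pose F2 := fun _ : nat => [set~ q].
pose S2 := sch A V2 who2 al1 rs1.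
have cr2 : forall r, correct F2 r -> r = q by move=> r /(_ 0); rewrite !inE negbK => /eqP.
have who2q : forall u r, who2 u = Some r -> r = q by move=> u r; rewrite /who2; case: ifP => // _ [<-].
have adm2 : admissible emb (@ConsPb 'I_n) f F2 V2 S2.
  apply: (@sch_admissible _ A V2 who2 al1 rs1 _ emb f F2 q).
  - by move=> t t' _; rewrite subxx.
  - by move=> u r /who2q ->; rewrite !inE eqxx.
  - move=> r /cr2 -> N; exists (maxn N T1); split; first exact: leq_maxl.
    by rewrite /who2 ltnNge leq_maxr.
  - move=> r snd x N /cr2 ->; case: (slot_inf x (maxn N T1)) => u [le e]; exists u.
    split; first by apply: leq_trans le; exact: leq_maxl.
    split => //; split => //; rewrite /who2 ltnNge.
    by have -> : T1 <= u by apply: leq_trans le; exact: leq_maxr.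
  - by [].
  - by apply: (solo_G6 (r0 := q)) => // u r /who2q.
have fa2 : at_most_faulty F2 f by exists [set~ q]; split.
case: (HA F2 V2 S2 fa2 adm2) => Ht2 Hi2 _ Hv2.
have cq : correct F2 q by move=> t; rewrite !inE eqxx.
case: (Ht2 q cq) => T2' [v2 Hd2'].
have := Hv2 _ _ _ Hd2'; rewrite /ConsPb => /(_ false (fun _ => erefl)) Ev; subst v2.
pose T2 := maxn T2' T1.
have Hd2 : a_dec A (cfg V2 S2 T2 q) = Some false by apply: Hi2 Hd2'; exact: leq_maxl.
have T12 : T1 <= T2 by exact: leq_maxr.
pose who3 := fun u => if u < T1 then Some p else Some q.
pose al3 := fun u (snd rcv : 'I_(f + 1)) => (snd == rcv) || (T2 <= u).
pose rs3 := fun u => (T2 <= u) && (emb q != None).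
pose V3 := fun x : 'I_(f + 1) => x == p.
pose F3 := fun t => [set x : 'I_(f + 1) | (x != q) && ((x != p) || (T1 <= t))].
pose S3 := sch A V3 who3 al3 rs3.
have cr3 : forall r, correct F3 r -> r = q.
  move=> r /(_ T1); rewrite !inE leqnn orbT andbT negbK => /eqP //.
have adm3 : admissible emb (@ConsPb 'I_n) f F3 V3 S3.
  apply: (@sch_admissible _ A V3 who3 al3 rs3 _ emb f F3 q).
  - move=> t t' le; apply/subsetP => x; rewrite !inE => /andP [-> /orP [->|h]] //.
    by rewrite (leq_trans h le) orbT.
  - move=> u r; rewrite /who3; case: ifP => lt [<-]; rewrite !inE ?eqxx //.
    by rewrite pq /= leqNgt lt.
  - move=> r /cr3 -> N; exists (maxn N T1); split; first exact: leq_maxl.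
    by rewrite /who3 ltnNge leq_maxr.
  - move=> r snd x N /cr3 ->; case: (slot_inf x (maxn N T2)) => u [le e]; exists u.
    have h2 : T2 <= u by apply: leq_trans le; exact: leq_maxr.
    split; first by apply: leq_trans le; exact: leq_maxl.
    split => //; split; last by rewrite /al3 h2 orbT.
    by rewrite /who3 ltnNge (leq_trans T12 h2).
  - move=> u /andP [h2 hn]; split => //.
    by rewrite /who3 ltnNge (leq_trans T12 h2).
  - move=> k _ r c b t0 Ec _ Cc.
    have cr : correct F3 r.
      move=> t; apply/negP => hr; case/negP: (Cc t); rewrite inE; apply/orP; left.
      by apply/existsP; exists r; rewrite Ec eqxx hr.
    move: (cr3 r cr) Ec => -> Ec x N.
    case: (slot_inf x (maxn N T2)) => u [le e]; exists u.
    have h2 : T2 <= u by apply: leq_trans le; exact: leq_maxr.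
    split; first by apply: leq_trans le; exact: leq_maxl.
    split => //; split; last by rewrite /rs3 h2 Ec.
    by rewrite /who3 ltnNge (leq_trans T12 h2).
have fa3 : at_most_faulty F3 f.
  by exists [set~ q]; split => // t x; rewrite !inE => /andP [].
case: (HA F3 V3 S3 fa3 adm3) => _ _ Hag3 _.
have sim1 : forall u, u < T1 -> S3 u = S1 u.
  elim/ltn_ind => u IH lt.
  rewrite /S3 /S1 (sch_eq A V3) (sch_eq A V1) /decide /who3 /who1 lt.
  congr (Some (p, _)); rewrite /inp.
  case Es: (slot u) => [t0 jj]; case: ltnP => // lt0.
  have Hs0 : forall t, t <= t0 -> S3 t = S1 t.
    move=> t le; apply: IH; [exact: leq_ltn_trans le lt0 | exact: ltn_trans (leq_ltn_trans le lt0) lt].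
  have Hout : output V3 S3 t0 = output V1 S1 t0.
    apply: output_eq; first exact: Hs0.
    move=> r i /sch_who; rewrite /who3 (ltn_trans lt0 lt) => [[<-]].
    apply: cfg_local => // w lw; rewrite (Hs0 w) //; exact: ltnW.
  case: jj Es => [|j] Es.
    rewrite /query Hout.
    have -> : rs3 u = false by rewrite /rs3 leqNgt (leq_trans lt T12).
    by case: (output V1 S1 t0) => [[r' [ms [b|]]]|] //=; rewrite andbF.
  have Hsent : sent V3 S3 t0 j = sent V1 S1 t0 j by rewrite /sent Hout.
  rewrite Hsent; case Hs: (sent V1 S1 t0 j) => [[snd [rcv m]]|]; last by [].
  have -> : snd = p by case: (sent_step Hs) => i /sch_who [].
  case: (eqVneq rcv p) => [->|ne]; last first.
    by [].
  have Ha : al3 u p p = true by apply/orP; left.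
  rewrite Ha; change (al1 u p p) with true.
  rewrite (has_range_eq (Q1 := qualm who3 al3 t0 j.+1 p p) (Q2 := qualm who1 al1 t0 j.+1 p p)); first by [].
  move=> u' a b.
  rewrite /qualm.
  have -> : who3 u' = Some p by rewrite /who3 (ltn_trans b lt).
  have -> : al3 u' p p = true by apply/orP; left.
  by [].
have E1 : cfg V3 S3 T1 p = cfg V1 S1 T1 p.
  apply: cfg_local; first by [].
  by move=> w lw; rewrite (sim1 w lw).
have S2none : forall u, u < T1 -> S2 u = None.
  by move=> u lt; apply: sch_none; rewrite /who2 lt.
have S3p : forall u, u < T1 -> exists i, S3 u = Some (p, i).
  by move=> u lt; apply: who_sch; rewrite /who3 lt.
have sim2 : forall u, T1 <= u -> u < T2 -> S3 u = S2 u.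
  elim/ltn_ind => u IH le lt.
  have projq : forall w, w < u -> proj q (S3 w) = proj q (S2 w).
    move=> w lw; case: (ltnP w T1) => hw.
      by case: (S3p w hw) => i ->; rewrite (S2none w hw) /proj pq.
    by rewrite IH // (ltn_trans lw lt).
  have nlt : (u < T1) = false by rewrite ltnNge le.
  have W3 : who3 u = Some q by rewrite /who3 nlt.
  have W2 : who2 u = Some q by rewrite /who2 nlt.
  have e3 := sch_eq A V3 who3 al3 rs3 u.
  have e2 := sch_eq A V2 who2 al1 rs1 u.
  rewrite /S3 /S2 e3 e2 /decide W3 W2.
  apply: (congr1 (fun x => Some (q, x))); rewrite /inp.
  case Es: (slot u) => [t0 jj]; case: ltnP => // lt0.
  case: jj Es => [|j] Es.
    have -> : rs3 u = false by rewrite /rs3 leqNgt lt.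
    change (rs1 u) with false.
    case: (query V3 S3 t0) => [[r' b]|]; case: (query V2 S2 t0) => [[r'' b']|];
      by rewrite ?andbF.
  have nT2 : (T2 <= u) = false by rewrite leqNgt lt.
  case: (ltnP t0 T1) => ht0.
    have -> : sent V2 S2 t0 j = None by rewrite /sent /output S2none.
    case Hs: (sent V3 S3 t0 j) => [[snd [rcv m]]|] //.
    have -> : snd = p.
      case: (sent_step Hs) => i; case: (S3p t0 ht0) => i' ->; by case.
    case: (eqVneq rcv q) => [->|ne]; last by [].
    have -> : al3 u p q = false by rewrite /al3 pq nT2.
    by [].
  have Hs0 : S3 t0 = S2 t0 by apply: IH => //; exact: ltn_trans lt0 lt.
  have Hout : output V3 S3 t0 = output V2 S2 t0.
    apply: (output_eq Hs0) => r i Hr.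
    have Er : r = q.
      move: (sch_who Hr); rewrite /who3 ltnNge ht0 /=; by case.
    subst r; apply: cfg_local; first exact: qp.
    move=> w lw; apply: projq; exact: ltn_trans lw lt0.
  have Hsent : sent V3 S3 t0 j = sent V2 S2 t0 j by rewrite /sent Hout.
  rewrite Hsent; case Hs: (sent V2 S2 t0 j) => [[snd [rcv m]]|]; last by [].
  have -> : snd = q by case: (sent_step Hs) => i /sch_who /who2q.
  case: (eqVneq rcv q) => [->|ne]; last by rewrite !andFb.
  have Ha : al3 u q q = true by apply/orP; left.
  rewrite Ha; change (al1 u q q) with true.
  rewrite (has_range_eq (Q1 := qualm who3 al3 t0 j.+1 q q) (Q2 := qualm who2 al1 t0 j.+1 q q)); first by [].
  move=> u' a b.
  have hu' : (u' < T1) = false by rewrite ltnNge (leq_trans ht0 (ltnW a)).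
  rewrite /qualm.
  have -> : who3 u' = Some q by rewrite /who3 hu'.
  have -> : who2 u' = Some q by rewrite /who2 hu'.
  have -> : al3 u' q q = true by apply/orP; left.
  by [].
have E2 : cfg V3 S3 T2 q = cfg V2 S2 T2 q.
  apply: cfg_local; first exact: qp.
  move=> w lw; case: (ltnP w T1) => hw.
    case: (S3p w hw) => i ->; rewrite (S2none w hw) /proj pq; by [].
  by rewrite (sim2 w hw lw).
have D1 : a_dec A (cfg V3 S3 T1 p) = Some true by rewrite E1.
have D2 : a_dec A (cfg V3 S3 T2 q) = Some false by rewrite E2.
by have := Hag3 _ _ _ _ _ _ D1 D2.
Qed.
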